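(* Let $M$ be a submonoid of $(\mathbb N_0,+)$. (a) $\mathfrak W_M$ is a bracket pattern category. (b) $\mathfrak W_{\mathbb N_0}=\emptyset$. If $M\neq\mathbb N_0$, then $\mathfrak W_M=\langle\!\langle\mathbb N_0\setminus M\rangle\!\rangle$ if $\mathbb N_0\setminus M$ is finite, and $\mathfrak W_M=\langle\!\langle\{0,\dots,v\}\setminus M\mid v\in\mathbb N,\ \{0,\dots,v\}\setminus M\neq\emptyset\rangle\!\rangle$ if $\mathbb N_0\setminus M$ is infinite. (c) $M=\mathbb N_0\setminus\bigcup_{w\in\mathfrak W_M}A(w)=\mathbb N_0\setminus\bigcup_{w\in\mathfrak W_M}w$.
   Context: $\mathbb N=\{1,2,\dots\}$, $\mathbb N_0=\mathbb N\cup\{0\}$. A bracket pattern is a non-empty finite subset $w\subseteq\mathbb N$; $\|w\|:=\max(w)$. For bracket patterns $w,w'$: superposition $w\cup w'$; for $j\in w$ the projection $\cap_j w:=\{i\in w\mid i\le j\}$; the dual $w^\dagger:=\{\|w\|-i\mid i\in\mathbb N_0,\ i<\|w\|,\ i\notin w\}$. A bracket pattern category is a (possibly empty) set of bracket patterns closed under superposition, duals and projections; $\langle\!\langle\mathfrak W\rangle\!\rangle$ denotes the smallest bracket pattern category containing a set $\mathfrak W$ of bracket patterns, and $\langle\!\langle w\rangle\!\rangle:=\langle\!\langle\{w\}\rangle\!\rangle$. The completion of a bracket pattern $w$ is $A(w):=\{j-i\mid j\in w,\ i\in\mathbb N_0,\ i\notin w,\ i<j\}$. A submonoid of $(\mathbb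 N_0,+)$ is a subset containing $0$ and closed under addition; for such $M$, $\mathfrak W_M:=\{w\mid w\text{ bracket pattern},\ A(w)\subseteq\mathbb N_0\setminus M\}$. *)

(* Defs.v *)
From mathcomp Require Import all_boot.
From mathcomp Require Import finmap.

Set Implicit Arguments.
Unset Strict Implicit.
Unset Printing Implicit Defensive.

Local Open Scope fset_scope.

Definition is_bp (w : {fset nat}) : Prop := w != fset0 /\ 0 \notin w.

Definition bp_norm (w : {fset nat}) : nat := \max_(i <- enum_fset w) i.

(* superposition w \cup w' is fsetU; projection \cap_j w *)
Definition bp_proj (j : nat) (w : {fset nat}) : {fset nat} :=
  [fset i in w | i <= j].

Definition bp_dual (w : {fset nat}) : {fset nat} :=
  [fset bp_norm w - i | i in [fset i in iota 0 (bp_norm w) | i \notin w]].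

Definition is_bp_cat (C : {fset nat} -> Prop) : Prop :=
  [/\ (forall w, C w -> is_bp w),
      (forall w w', C w -> C w' -> C (w `|` w')),
      (forall w, C w -> C (bp_dual w)) &
      (forall w j, C w -> j \in w -> C (bp_proj j w))].

Definition bp_gen (W : {fset nat} -> Prop) (w : {fset nat}) : Prop :=
  forall C, is_bp_cat C -> (forall x, W x -> C x) -> C w.

Definition completion (w : {fset nat}) (n : nat) : Prop :=
  exists j i, [/\ j \in w, i < j, i \notin w & n = j - i].

Definition submonoid (M : nat -> Prop) : Prop :=
  M 0 /\ (forall a b, M a -> M b -> M (addn a b)).

Definition WM (M : nat -> Prop) (w : {fset nat}) : Prop :=
  is_bp w /\ (forall n, completion w n -> ~ M n).

(* Main.v *)
Require Import Defs.
From mathcomp Require Import all_boot.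
From mathcomp Require Import finmap.
From Stdlib Require Import ClassicalEpsilon Classical.

Set Implicit Arguments.
Unset Strict Implicit.
Local Open Scope fset_scope.

Definition Mb (M : nat -> Prop) (n : nat) : bool :=
  if excluded_middle_informative (M n) then true else false.

Lemma MbP (M : nat -> Prop) n : reflect (M n) (Mb M n).
Proof. rewrite /Mb; case: excluded_middle_informative => h; by constructor. Qed.

Lemma norm_ge (w : {fset nat}) x : x \in w -> x <= bp_norm w.
Proof. by move=> xw; rewrite /bp_norm; apply: (leq_bigmax_seq x) => //. Qed.

Lemma norm_le (w : {fset nat}) m : (forall x, x \in w -> x <= m) -> bp_norm w <= m.
Proof. by move=> H; apply/bigmax_leqP_seq => i iw _; apply: H. Qed.

Lemma norm_eq (w : {fset nat}) j : j \in w -> (forall x, x \in w -> x <= j) -> bp_norm w = j.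
Proof. by move=> jw H; apply/eqP; rewrite eqn_leq norm_le // norm_ge. Qed.

Lemma norm_in (w : {fset nat}) : w != fset0 -> bp_norm w \in w.
Proof.
move=> /fset0Pn [x xw].
have [m [mw mmax]] : exists m, m \in w /\ forall y, y \in w -> y <= m.
  suff: forall s : seq nat, s != [::] -> exists m, m \in s /\ forall y, y \in s -> y <= m.
    move=> /(_ (enum_fset w)) [|m [mw H]]; first by have : x \in enum_fset w by []; case: (enum_fset w).
    by exists m; split.
  elim=> // a [|b s] IH _.
    by exists a; split; [rewrite inE | move=> y; rewrite inE => /eqP ->].
  have [m [ms H]] := IH isT.
  case: (leqP a m) => am.
    exists m; split; first by rewrite inE ms orbT.
    by move=> y; rewrite inE => /orP [/eqP -> | /H].
  exists a; split; first by rewrite inE eqxx.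
  move=> y; rewrite inE => /orP [/eqP -> // | /H ym]; exact: leq_trans ym (ltnW am).
by rewrite (norm_eq mw mmax).
Qed.

Lemma mem_dual (w : {fset nat}) a :
  a \in bp_dual w <-> exists i, [/\ i < bp_norm w, i \notin w & a = bp_norm w - i].
Proof.
split.
  move=> /imfsetP [i /=]; rewrite !inE mem_iota /= add0n => /andP [iN iw] ->.
  by exists i.
move=> [i [iN iw ->]].
by apply/imfsetP; exists i => //=; rewrite !inE mem_iota add0n iN iw.
Qed.

Lemma mem_proj (w : {fset nat}) j x : (x \in bp_proj j w) = (x \in w) && (x <= j).
Proof. by rewrite /bp_proj !inE. Qed.
Lemma WM_union (M : nat -> Prop) w w' : WM M w -> WM M w' -> WM M (w `|` w').
Proof.
move=> [[w0 w00] Hw] [[w'0 w'00] Hw']; split.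
  split; last by rewrite inE negb_or w00.
  by move: w0 => /fset0Pn [x xw]; apply/fset0Pn; exists x; rewrite inE xw.
move=> n [j [i [jw ij iw ->]]].
move: iw; rewrite inE negb_or => /andP [iw iw'].
move: jw; rewrite inE => /orP [jw|jw].
  by apply: Hw; exists j, i.
by apply: Hw'; exists j, i.
Qed.

Lemma WM_proj (M : nat -> Prop) w j : WM M w -> j \in w -> WM M (bp_proj j w).
Proof.
move=> [[w0 w00] Hw] jw; split.
  split; first by apply/fset0Pn; exists j; rewrite mem_proj jw leqnn.
  by rewrite mem_proj negb_and w00.
move=> n [k [i [kw ik iw ->]]].
move: kw; rewrite mem_proj => /andP [kw kj].
move: iw; rewrite mem_proj negb_and => /orP [iw|]; last first.
  by rewrite -ltnNge => ji; have := leq_ltn_trans kj (ltn_trans ji ik); rewrite ltnn.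
by apply: Hw; exists k, i.
Qed.

Lemma WM_dual (M : nat -> Prop) w : WM M w -> WM M (bp_dual w).
Proof.
move=> [[w0 w00] Hw].
have Nw := norm_in w0.
have N0 : 0 < bp_norm w.
  by rewrite lt0n; apply/eqP => h; move: Nw; rewrite h (negbTE w00).
split.
  split.
    by apply/fset0Pn; exists (bp_norm w); apply/mem_dual; exists 0; rewrite subn0.
  apply/negP => /mem_dual [i [iN _ h]].
  by move/eqP: h; rewrite eq_sym subn_eq0 leqNgt iN.
move=> n [a [b [/mem_dual [i [iN iw ->]] ba bd ->]]].
have bN : b < bp_norm w by apply: leq_trans ba (leq_subr _ _).
have b'w : bp_norm w - b \in w.
  case: b ba bd bN => [|b] ba bd bN; first by rewrite subn0.
  apply/negPn/negP => b'w; move/negP: bd; apply; apply/mem_dual.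
  exists (bp_norm w - b.+1); split => //.
    by rewrite ltn_subrL.
  by rewrite subKn // ltnW.
apply: Hw; exists (bp_norm w - b), i; split => //.
  by rewrite ltn_subRL addnC -ltn_subRL.
by rewrite subnAC.
Qed.

Lemma WM_cat (M : nat -> Prop) : is_bp_cat (WM M).
Proof.
split.
- by move=> w [].
- exact: WM_union.
- exact: WM_dual.
- by move=> w j; apply: WM_proj.
Qed.

Lemma gen_WM (M : nat -> Prop) (HM : submonoid M) (x : {fset nat}) :
  x != fset0 -> (forall n, n \in x -> ~ M n) ->
  (forall i j, j \in x -> i < j -> ~ M i -> i \in x) -> WM M x.
Proof.
case: HM => M0 Madd x0 H1 H2; split.
  split => //; apply/negP => /H1; exact.
move=> n [j [i [jx ij ix ->]]] Mn.
have Mi : M i by apply: NNPP => nMi; move/negP: ix; apply; exact: H2 jx ij nMi.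
by apply: (H1 j jx); rewrite -(subnK (ltnW ij)); apply: Madd.
Qed.

Lemma key (M : nat -> Prop) (HM : submonoid M) w G j :
  WM M w -> j \in w -> (forall n, n \in G <-> n <= j /\ ~ M n) ->
  j \in bp_dual G /\ bp_dual G `<=` w.
Proof.
case: HM => M0 Madd [[w0 w00] Hw] jw HG.
have j0 : 0 < j by rewrite lt0n; apply/eqP => h; move: jw; rewrite h (negbTE w00).
have nMj : ~ M j by apply: Hw; exists j, 0; rewrite subn0.
have jG : j \in G by apply/HG.
have NG : bp_norm G = j by apply: norm_eq => // x /HG [].
have G0 : 0 \notin G by apply/negP => /HG [_].
split.
  by apply/mem_dual; exists 0; rewrite NG subn0.
apply/fsubsetP => a /mem_dual [i []]; rewrite NG => ij iG ->.
have Mi : M i by apply: NNPP => nMi; move/negP: iG; apply; apply/HG; split => //; exact: ltnW.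
case: i ij iG Mi => [|i] ij iG Mi; first by rewrite subn0.
apply/negPn/negP => jiw.
apply: (Hw i.+1) Mi; exists j, (j - i.+1); split => //.
  by rewrite ltn_subrL.
by rewrite subKn // ltnW.
Qed.

Lemma cover (C : {fset nat} -> Prop) (w : {fset nat}) : is_bp_cat C -> w != fset0 ->
  (forall j, j \in w -> exists P, [/\ C P, j \in P & P `<=` w]) -> C w.
Proof.
move=> [_ CU _ _] /fset0Pn [x xw] H.
suff: forall s : seq nat, s != [::] -> {subset s <= w} ->
   exists P, [/\ C P, {subset s <= P} & P `<=` w].
  move=> /(_ (enum_fset w)) [||P [CP sP Pw]] //.
  - by have : x \in enum_fset w by []; case: (enum_fset w).
  have -> : w = P.
    by apply/eqP; rewrite eqEfsubset Pw andbT; apply/fsubsetP => y yw; apply: sP.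
  exact: CP.
elim=> // a [|b s] IH _ sw.
  have [P [CP aP Pw]] := H a (sw a (mem_head _ _)).
  by exists P; split => // y; rewrite inE => /eqP ->.
have [P [CP sP Pw]] := IH isT (fun y ys => sw y (@mem_behead _ (a :: b :: s) y ys)).
have [Q [CQ aQ Qw]] := H a (sw a (mem_head _ _)).
exists (Q `|` P); split; first exact: CU.
  by move=> y; rewrite inE => /orP [/eqP ->|/sP yP]; rewrite inE ?aQ ?yP ?orbT.
by rewrite fsubUset Qw Pw.
Qed.

Definition X (M : nat -> Prop) (v : nat) : {fset nat} :=
  [fset n in iota 0 v.+1 | ~~ Mb M n].

Lemma mem_X (M : nat -> Prop) v n : n \in X M v <-> n <= v /\ ~ M n.
Proof.
have Hi : (n \in iota 0 v.+1) = (n <= v) by rewrite mem_iota.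
rewrite /X in_fset inE Hi /=; split.
  by move=> /andP [nv /MbP h]; split.
by move=> [nv nM]; rewrite nv; apply/MbP.
Qed.

Lemma X_WM (M : nat -> Prop) (HM : submonoid M) v : ~ M v -> WM M (X M v).
Proof.
move=> nMv; apply: gen_WM => //.
- by apply/fset0Pn; exists v; apply/mem_X.
- by move=> n /mem_X [].
- move=> i j /mem_X [jv _] ij nMi; apply/mem_X; split => //.
  exact: leq_trans (ltnW ij) jv.
Qed.

Lemma WM_pos (M : nat -> Prop) w j : WM M w -> j \in w -> 0 < j.
Proof.
move=> [[_ w00] _] jw; rewrite lt0n; apply/eqP => h; move: jw; rewrite h (negbTE w00).
by [].
Qed.

Lemma WM_notM (M : nat -> Prop) w j : WM M w -> j \in w -> ~ M j.
Proof.
move=> Ww jw; have j0 := WM_pos Ww jw.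
case: Ww => [[_ w00] Hw]; apply: Hw; exists j, 0; split => //; by rewrite subn0.
Qed.

Theorem lemma7p16 (M : nat -> Prop) (HM : submonoid M) :
  (* (a) *)
  is_bp_cat (WM M) /\
  (* (b) *)
  ((forall n, M n) -> forall w, ~ WM M w) /\
  ((exists n, ~ M n) ->
     (forall S : {fset nat}, (forall n, n \in S <-> ~ M n) ->
        forall w, WM M w <-> bp_gen (fun x => x = S) w) /\
     ((~ exists S : {fset nat}, forall n, n \in S <-> ~ M n) ->
        forall w, WM M w <->
          bp_gen (fun x => exists v, [/\ 0 < v, x != fset0 &
                    forall n, n \in x <-> (n <= v /\ ~ M n)]) w)) /\
  (* (c) *)
  (forall n, M n <-> ~ exists w, WM M w /\ completion w n) /\
  (forall n, M n <-> ~ exists w, WM M w /\ n \in w).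
Proof.
have M0 : M 0 by case: HM.
split; first exact: WM_cat.
split.
  move=> allM w Ww; have [[w0 _] _] := Ww.
  by move/fset0Pn: w0 => [x xw]; apply: (WM_notM Ww xw).
split.
  move=> [n0 nM0]; split.
    move=> S HS w; split.
      move=> Ww C Ccat CS; have Ccat' := Ccat; case: Ccat' => [_ _ Cd Cp].
      apply: cover => //; first by case: Ww => [[]].
      move=> j jw; have nMj := WM_notM Ww jw.
      have spec : forall n, n \in bp_proj j S <-> n <= j /\ ~ M n.
        move=> n; rewrite mem_proj; split.
          by move=> /andP [/HS ? ?]; split.
        by move=> [nj nMn]; rewrite nj andbT; apply/HS.
      have [jd sub] := key HM Ww jw spec.
      exists (bp_dual (bp_proj j S)); split => //.
      by apply: Cd; apply: Cp; [apply: CS | apply/HS].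
    move=> Hg; apply: Hg; first exact: WM_cat.
    move=> x ->; apply: gen_WM => //.
    - by apply/fset0Pn; exists n0; apply/HS.
    - by move=> n /HS.
    - by move=> i j _ _ /HS.
  move=> _ w; split.
    move=> Ww C Ccat CS; have Ccat' := Ccat; case: Ccat' => [_ _ Cd Cp].
    apply: cover => //; first by case: Ww => [[]].
    move=> j jw; have nMj := WM_notM Ww jw.
    have [jd sub] := key HM Ww jw (mem_X M j).
    exists (bp_dual (X M j)); split => //.
    apply: Cd; apply: CS; exists j; split.
    - exact: WM_pos Ww jw.
    - by apply/fset0Pn; exists j; apply/mem_X.
    - exact: mem_X.
  move=> Hg; apply: Hg; first exact: WM_cat.
  move=> x [v [v0 xne spec]]; apply: gen_WM => //.
  - by move=> n /spec [].
  - move=> i j /spec [jv _] ij nMi; apply/spec; split => //.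
    exact: leq_trans (ltnW ij) jv.
split.
  move=> n; split.
    by move=> Mn [w [[_ Hw] c]]; apply: (Hw n c).
  move=> H; apply: NNPP => nMn; apply: H.
  have n0 : 0 < n by rewrite lt0n; apply/eqP => h; apply: nMn; rewrite h.
  exists (X M n); split; first exact: X_WM.
  exists n, 0; split => //.
  - by apply/mem_X.
  - by apply/negP => /mem_X [_].
  - by rewrite subn0.
move=> n; split.
  by move=> Mn [w [Ww nw]]; apply: (WM_notM Ww nw).
move=> H; apply: NNPP => nMn; apply: H.
exists (X M n); split; first exact: X_WM.
by apply/mem_X.
Qed.
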